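(* Let $H_A,H_B,H_C,H_D$ be finite-dimensional Hilbert spaces, let $|\psi_{AB}\rangle\in H_A\otimes H_B$ and $|\phi_{CD}\rangle\in H_C\otimes H_D$ be unit vectors with Schmidt decompositions $|\psi_{AB}\rangle=\sum_i\lambda_i|i_Ai_B\rangle$ and $|\phi_{CD}\rangle=\sum_j\mu_j|j_Cj_D\rangle$ (Schmidt coefficients $\lambda_i,\mu_j\ge 0$), and let $\rho_{AB}=|\psi_{AB}\rangle\langle\psi_{AB}|$, $\rho_{CD}=|\phi_{CD}\rangle\langle\phi_{CD}|$. Then $$N_H^{b}(\rho_{AB}\otimes\rho_{CD})=1-\sum_{i,j}\lambda_i^4\mu_j^4 .$$
   Context: For states $\rho_{AB}$ on $H_A\otimes H_B$ and $\rho_{CD}$ on $H_C\otimes H_D$, the nonbilocality measure is defined as $$N_H^{b}(\rho_{AB}\otimes\rho_{CD})=\max_{\Pi^{BC}}\big\|\sqrt{\rho_{AB}\otimes\rho_{CD}}-\Pi^{BC}(\sqrt{\rho_{AB}\otimes\rho_{CD}})\big\|^2,$$ where $\|X\|=\sqrt{\mathrm{tr}(X^\dagger X)}$ is the Hilbert–Schmidt norm, the maximum is over all von Neumann (complete rank-one projective) measurements $\Pi^{BC}=\{\Pi^{BC}_h\}$ on $H_B\otimes H_C$ that leave $\rho_{BC}=\mathrm{tr}_{AD}(\rho_{AB}\otimes\rho_{CD})=\rho_B\otimes\rho_C$ invariant, i.e. $\sum_h\Pi^{BC}_h\rho_{BC}\Pi^{BC}_h=\rho_{BC}$, and $\Pi^{BC}(X)=\sum_h(I^A\otimes\Pi^{BC}_h\otimes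 I^D)X(I^A\otimes\Pi^{BC}_h\otimes I^D)$ (with the tensor factors ordered $A,B,C,D$). *)

(* Defs.v *)
From HB Require Import structures.
From mathcomp Require Import all_boot all_order all_algebra.
From mathcomp Require Import mxtens complex.
From mathcomp Require Import reals.

Set Implicit Arguments.
Unset Strict Implicit.
Unset Printing Implicit Defensive.

Import Order.TTheory GRing.Theory Num.Theory.
Local Open Scope ring_scope.

Section QDefs.
Variable C : numClosedFieldType.

Definition adjmx (m n : nat) (A : 'M[C]_(m, n)) : 'M[C]_(n, m) :=
  (map_mx Num.conj A)^T.

Definition hs_norm2 (n : nat) (X : 'M[C]_n) : C := \tr (adjmx X *m X).

Definition unit_vec (n : nat) (v : 'cV[C]_n) : Prop := (adjmx v *m v) 0 0 = 1.

Definition orthonormal_fam (k n : nat) (e : 'I_k -> 'cV[C]_n) : Prop :=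
  forall i j, (adjmx (e i) *m e j) 0 0 = (i == j)%:R.

Definition psdmx (n : nat) (A : 'M[C]_n) : Prop :=
  adjmx A = A /\ forall v : 'cV[C]_n, 0 <= (adjmx v *m A *m v) 0 0.

Definition is_sqrtmx (n : nat) (A S : 'M[C]_n) : Prop := psdmx S /\ S *m S = A.

(* partial traces over the first / second tensor factor
   (tensor index convention of mxtens: (i, j) |-> i * n + j) *)
Definition ptr1 (m n : nat) (M : 'M[C]_(m * n)) : 'M[C]_n :=
  \matrix_(j, j') \sum_(i < m) M (mxtens_index (i, j)) (mxtens_index (i, j')).
Definition ptr2 (m n : nat) (M : 'M[C]_(m * n)) : 'M[C]_m :=
  \matrix_(i, i') \sum_(j < n) M (mxtens_index (i, j)) (mxtens_index (i', j)).

(* von Neumann (complete rank-one projective) measurement on a space of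
   dimension d: rank-one orthogonal projectors summing to the identity.
   Such a family has exactly d members, whence the index type 'I_d. *)
Definition vN_meas (d : nat) (P : 'I_d -> 'M[C]_d) : Prop :=
  (forall h, [/\ adjmx (P h) = P h, P h *m P h = P h & \rank (P h) = 1%N])
  /\ \sum_(h < d) P h = 1%:M.

Definition meas_invariant (d : nat) (P : 'I_d -> 'M[C]_d) (sigma : 'M[C]_d) :=
  \sum_(h < d) P h *m sigma *m P h = sigma.

Section Four.
Variables dA dB dC dD : nat.

Definition dimABCD_1 : (dA * dB * (dC * dD) = dA * dB * dC * dD)%N :=
  mulnA (dA * dB) dC dD.
Definition dimABCD_2 : (dA * (dB * dC) * dD = dA * dB * dC * dD)%N :=
  congr1 (fun x => x * dD)%N (mulnA dA dB dC).

Definition tens_ABCD (rAB : 'M[C]_(dA * dB)) (rCD : 'M[C]_(dC * dD))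
  : 'M[C]_(dA * dB * dC * dD) :=
  castmx (dimABCD_1, dimABCD_1) (rAB *t rCD).

Definition embed_BC (Q : 'M[C]_(dB * dC)) : 'M[C]_(dA * dB * dC * dD) :=
  castmx (dimABCD_2, dimABCD_2) ((1%:M : 'M[C]_dA) *t Q *t (1%:M : 'M[C]_dD)).

Definition Pi_BC (P : 'I_(dB * dC) -> 'M[C]_(dB * dC))
  (X : 'M[C]_(dA * dB * dC * dD)) : 'M[C]_(dA * dB * dC * dD) :=
  \sum_(h < dB * dC) embed_BC (P h) *m X *m embed_BC (P h).

(* "N_H^b(rho_AB (x) rho_CD) = v": v is the maximum of
   || sqrt(rho_AB (x) rho_CD) - Pi^{BC}(sqrt(rho_AB (x) rho_CD)) ||^2 over all
   von Neumann measurements Pi^{BC} on H_B (x) H_C leaving rho_B (x) rho_C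
   invariant; sqrtR is the square root of rho_AB (x) rho_CD. *)
Definition NHb_is (rAB : 'M[C]_(dA * dB)) (rCD : 'M[C]_(dC * dD))
  (sqrtR : 'M[C]_(dA * dB * dC * dD)) (v : C) : Prop :=
  let rBC := ptr1 rAB *t ptr2 rCD in
  let admissible P := vN_meas P /\ meas_invariant P rBC in
  (exists P, admissible P /\ hs_norm2 (sqrtR - Pi_BC P sqrtR) = v) /\
  (forall P, admissible P -> hs_norm2 (sqrtR - Pi_BC P sqrtR) <= v).

End Four.
End QDefs.

(* Main.v *)
Require Import Defs.
From HB Require Import structures.
From mathcomp Require Import all_boot all_order all_algebra.
From mathcomp Require Import mxtens complex.
From mathcomp Require Import reals.
From mathcomp Require Import sesquilinear spectral.
From mathcomp Require Import ring lra zify.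
Set Implicit Arguments.
Unset Strict Implicit.
Unset Printing Implicit Defensive.
Import Order.TTheory GRing.Theory Num.Theory.
Local Open Scope ring_scope.
Section Gen.
Variable C : numClosedFieldType.
Implicit Types m n p : nat.

Lemma adjmxE m n (A : 'M[C]_(m,n)) i j : adjmx A i j = (A j i)^*.
Proof. by rewrite !mxE. Qed.

Lemma adjmxK m n (A : 'M[C]_(m,n)) : adjmx (adjmx A) = A.
Proof. by apply/matrixP=> i j; rewrite !mxE conjCK. Qed.

Lemma adjmxM m n p (A : 'M[C]_(m,n)) (B : 'M[C]_(n,p)) :
  adjmx (A *m B) = adjmx B *m adjmx A.
Proof. by rewrite /adjmx map_mxM trmx_mul. Qed.

Lemma adjmxD m n (A B : 'M[C]_(m,n)) : adjmx (A + B) = adjmx A + adjmx B.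
Proof. by apply/matrixP=> i j; rewrite !mxE rmorphD. Qed.

Lemma adjmxN m n (A : 'M[C]_(m,n)) : adjmx (- A) = - adjmx A.
Proof. by apply/matrixP=> i j; rewrite !mxE rmorphN. Qed.

Lemma adjmxB m n (A B : 'M[C]_(m,n)) : adjmx (A - B) = adjmx A - adjmx B.
Proof. by rewrite adjmxD adjmxN. Qed.

Lemma adjmxZ m n a (A : 'M[C]_(m,n)) : adjmx (a *: A) = a^* *: adjmx A.
Proof. by apply/matrixP=> i j; rewrite !mxE rmorphM. Qed.

Lemma adjmx0 m n : adjmx (0 : 'M[C]_(m,n)) = 0.
Proof. by apply/matrixP=> i j; rewrite !mxE rmorph0. Qed.

Lemma adjmx_sum m n I (r : seq I) (P : pred I) (F : I -> 'M[C]_(m,n)) :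
  adjmx (\sum_(i <- r | P i) F i) = \sum_(i <- r | P i) adjmx (F i).
Proof.
apply/matrixP=> i j; rewrite !mxE !summxE rmorph_sum; apply: eq_bigr => k _.
by rewrite !mxE.
Qed.

Lemma adjmx1 n : adjmx (1%:M : 'M[C]_n) = 1%:M.
Proof. by apply/matrixP=> i j; rewrite !mxE rmorph_nat eq_sym. Qed.

Lemma adjmx_tens m n p q (A : 'M[C]_(m,n)) (B : 'M[C]_(p,q)) :
  adjmx (A *t B) = adjmx A *t adjmx B.
Proof. by apply/matrixP=> i j; rewrite !mxE rmorphM. Qed.

Lemma adjmx_cast m n m' n' (e1 : m = m') (e2 : n = n') (A : 'M[C]_(m,n)) :
  adjmx (castmx (e1, e2) A) = castmx (e2, e1) (adjmx A).
Proof. by apply/matrixP=> i j; rewrite !(castmxE, mxE). Qed.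

Lemma adjmx_tstar m n (A : 'M[C]_(m,n)) : adjmx A = (A ^t*)%sesqui.
Proof. by rewrite /adjmx map_trmx. Qed.

Lemma tr_adjE m n (M : 'M[C]_(m,n)) :
  \tr (adjmx M *m M) = \sum_i \sum_j `|M j i| ^+ 2.
Proof.
rewrite /mxtrace; apply: eq_bigr => i _; rewrite !mxE; apply: eq_bigr => j _.
by rewrite !mxE normCK mulrC.
Qed.

Lemma tr_adj_ge0 m n (M : 'M[C]_(m,n)) : 0 <= \tr (adjmx M *m M).
Proof. by rewrite tr_adjE; apply: sumr_ge0 => i _; apply: sumr_ge0 => j _; apply: exprn_ge0. Qed.

Lemma tr_adj_eq0 m n (M : 'M[C]_(m,n)) : \tr (adjmx M *m M) = 0 -> M = 0.
Proof.
rewrite tr_adjE => /eqP; rewrite psumr_eq0; last first.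
  by move=> i _; apply: sumr_ge0 => j _; apply: exprn_ge0.
move=> /allP H; apply/matrixP => j i; rewrite mxE.
have /implyP/(_ isT) := H i (mem_index_enum _).
rewrite psumr_eq0; last by move=> k _; apply: exprn_ge0.
move=> /allP/(_ j (mem_index_enum _))/implyP/(_ isT).
by rewrite expf_eq0 /= normr_eq0 => /eqP.
Qed.

End Gen.
Section Idx.
Variable C : numClosedFieldType.

Lemma sum_tens m n (F : 'I_(m*n) -> C) :
  \sum_k F k = \sum_i \sum_j F (mxtens_index (i,j)).
Proof.
transitivity (\sum_(p : 'I_m * 'I_n) F (mxtens_index p)).
  rewrite (reindex (@mxtens_index m n)) //=.
  by exists (@mxtens_unindex m n) => k _; rewrite (mxtens_indexK, mxtens_unindexK).
by rewrite pair_big /=; apply: eq_bigr => -[i j].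
Qed.

Lemma sum_cast n n' (e : n = n') (F : 'I_n' -> C) :
  \sum_(k < n') F k = \sum_(k < n) F (cast_ord e k).
Proof. by case: n' / e F => F; apply: eq_bigr => k _; rewrite cast_ord_id. Qed.

Lemma mxtraceE n (A : 'M[C]_n) : \tr A = \sum_i A i i.
Proof. by []. Qed.

Lemma mxtrace_tens m n (A : 'M[C]_m) (B : 'M[C]_n) : \tr (A *t B) = \tr A * \tr B.
Proof.
rewrite /mxtrace sum_tens mulr_suml; apply: eq_bigr => i _.
by rewrite mulr_sumr; apply: eq_bigr => j _; rewrite tensmxE.
Qed.

Lemma ptr1_tens m n (A : 'M[C]_m) (B : 'M[C]_n) : ptr1 (A *t B) = \tr A *: B.
Proof.
apply/matrixP => j j'; rewrite !mxE /mxtrace mulr_suml; apply: eq_bigr => i _.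
by rewrite tensmxE.
Qed.

Lemma ptr2_tens m n (A : 'M[C]_m) (B : 'M[C]_n) : ptr2 (A *t B) = \tr B *: A.
Proof.
apply/matrixP => j j'; rewrite !mxE /mxtrace mulr_suml; apply: eq_bigr => i _.
by rewrite tensmxE mulrC.
Qed.

Lemma ptr1D m n (A B : 'M[C]_(m * n)) : ptr1 (A + B) = ptr1 A + ptr1 B.
Proof. by apply/matrixP => j j'; rewrite !mxE -big_split; apply: eq_bigr => i _; rewrite mxE. Qed.
Lemma ptr2D m n (A B : 'M[C]_(m * n)) : ptr2 (A + B) = ptr2 A + ptr2 B.
Proof. by apply/matrixP => j j'; rewrite !mxE -big_split; apply: eq_bigr => i _; rewrite mxE. Qed.
Lemma ptr1Z m n a (A : 'M[C]_(m * n)) : ptr1 (a *: A) = a *: ptr1 A.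
Proof. by apply/matrixP => j j'; rewrite !mxE mulr_sumr; apply: eq_bigr => i _; rewrite mxE. Qed.
Lemma ptr2Z m n a (A : 'M[C]_(m * n)) : ptr2 (a *: A) = a *: ptr2 A.
Proof. by apply/matrixP => j j'; rewrite !mxE mulr_sumr; apply: eq_bigr => i _; rewrite mxE. Qed.
Lemma ptr1_sum m n I (r : seq I) (F : I -> 'M[C]_(m * n)) :
  ptr1 (\sum_(x <- r) F x) = \sum_(x <- r) ptr1 (F x).
Proof.
elim: r => [|x r IH]; rewrite ?big_nil ?big_cons.
  by apply/matrixP => j j'; rewrite !mxE big1 // => i _; rewrite mxE.
by rewrite ptr1D IH.
Qed.
Lemma ptr2_sum m n I (r : seq I) (F : I -> 'M[C]_(m * n)) :
  ptr2 (\sum_(x <- r) F x) = \sum_(x <- r) ptr2 (F x).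
Proof.
elim: r => [|x r IH]; rewrite ?big_nil ?big_cons.
  by apply/matrixP => j j'; rewrite !mxE big1 // => i _; rewrite mxE.
by rewrite ptr2D IH.
Qed.

Variables dA dB dC dD : nat.

Definition idx4 (a : 'I_dA) (b : 'I_dB) (c : 'I_dC) (d : 'I_dD) :
  'I_(dA * dB * dC * dD) :=
  cast_ord (dimABCD_2 dA dB dC dD)
    (mxtens_index (mxtens_index (a, mxtens_index (b, c)), d)).

Lemma sum4 (F : 'I_(dA * dB * dC * dD) -> C) :
  \sum_k F k = \sum_a \sum_b \sum_c \sum_d F (idx4 a b c d).
Proof.
rewrite (sum_cast (dimABCD_2 dA dB dC dD)) sum_tens sum_tens.
apply: eq_bigr => a _; rewrite sum_tens; apply: eq_bigr => b _.
by apply: eq_bigr => c _.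
Qed.

Lemma idx4_cast a b c d :
  cast_ord (esym (dimABCD_1 dA dB dC dD)) (idx4 a b c d) =
  mxtens_index (mxtens_index (a, b), mxtens_index (c, d)).
Proof. by apply: val_inj => /=; ring. Qed.

End Idx.
Section Emb.
Variable C : numClosedFieldType.
Variables dA dB dC dD : nat.

Lemma delta_sum2 (a : 'I_dA) (d : 'I_dD) (q : 'I_dB -> 'I_dC -> C)
   (F : 'I_dA -> 'I_dB -> 'I_dC -> 'I_dD -> C) :
  \sum_a' \sum_b' \sum_c' \sum_d'
     ((((a == a')%:R * q b' c') * (d == d')%:R) * F a' b' c' d')
  = \sum_b' \sum_c' q b' c' * F a b' c' d.
Proof.
rewrite (bigD1 a) //= [X in _ + X]big1 ?addr0; last first.
  move=> a' /negPf H; rewrite eq_sym H.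
  by apply: big1 => b' _; apply: big1 => c' _; apply: big1 => d' _; rewrite !mul0r.
apply: eq_bigr => b' _; apply: eq_bigr => c' _.
rewrite (bigD1 d) //= [X in _ + X]big1 ?addr0; last first.
  by move=> d' /negPf H; rewrite eq_sym H mulr0 mul0r.
by rewrite !eqxx !(mulr1n, mul1r, mulr1).
Qed.

Lemma embed_idx4 (Q : 'M[C]_(dB*dC)) a b c d a' b' c' d' :
  embed_BC dA dD Q (idx4 a b c d) (idx4 a' b' c' d') =
  (a == a')%:R * Q (mxtens_index (b, c)) (mxtens_index (b', c')) * (d == d')%:R.
Proof. by rewrite /embed_BC /idx4 castmxE !cast_ordK !tensmxE !mxE. Qed.

Lemma tens_idx4 (X : 'M[C]_(dA*dB)) (Y : 'M[C]_(dC*dD)) a b c d a' b' c' d' :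
  tens_ABCD X Y (idx4 a b c d) (idx4 a' b' c' d') =
  X (mxtens_index (a, b)) (mxtens_index (a', b')) *
  Y (mxtens_index (c, d)) (mxtens_index (c', d')).
Proof. by rewrite /tens_ABCD castmxE !idx4_cast tensmxE. Qed.

Lemma perm6 (G : 'I_dA -> 'I_dB -> 'I_dC -> 'I_dD -> 'I_dB -> 'I_dC -> C) :
  \sum_a \sum_b \sum_c \sum_d \sum_b' \sum_c' G a b c d b' c' =
  \sum_b \sum_c \sum_b' \sum_c' \sum_a \sum_d G a b c d b' c'.
Proof.
rewrite exchange_big; apply: eq_bigr => b _.
rewrite exchange_big; apply: eq_bigr => c _.
under eq_bigr => a _ do rewrite exchange_big.
under eq_bigr => a _ do under eq_bigr => b' _ do rewrite exchange_big.
rewrite exchange_big; apply: eq_bigr => b' _.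
by rewrite exchange_big.
Qed.

Lemma tr_embed (Q : 'M[C]_(dB*dC)) (X : 'M[C]_(dA*dB)) (Y : 'M[C]_(dC*dD)) :
  \tr (embed_BC dA dD Q *m tens_ABCD X Y) = \tr (Q *m (ptr1 X *t ptr2 Y)).
Proof.
rewrite /mxtrace sum4.
under eq_bigr => a _ do under eq_bigr => b _ do under eq_bigr => c _ do
  under eq_bigr => d _ do rewrite mxE sum4.
under eq_bigr => a _ do under eq_bigr => b _ do under eq_bigr => c _ do
  under eq_bigr => d _ do under eq_bigr => a' _ do under eq_bigr => b' _ do
  under eq_bigr => c' _ do under eq_bigr => d' _ do rewrite embed_idx4 tens_idx4.
under eq_bigr => a _ do under eq_bigr => b _ do under eq_bigr => c _ do
  under eq_bigr => d _ do rewrite (delta_sum2 a d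
     (fun b' c' => Q (mxtens_index (b, c)) (mxtens_index (b', c')))
     (fun a' b' c' d' => X (mxtens_index (a', b')) (mxtens_index (a, b)) *
                         Y (mxtens_index (c', d')) (mxtens_index (c, d)))).
rewrite perm6 sum_tens; apply: eq_bigr => b _; apply: eq_bigr => c _.
rewrite mxE sum_tens; apply: eq_bigr => b' _; apply: eq_bigr => c' _.
rewrite tensmxE !mxE mulr_suml mulr_sumr; apply: eq_bigr => a _.
rewrite mulr_sumr mulr_sumr; apply: eq_bigr => d _.
by rewrite mulrA.
Qed.
End Emb.
Section Norm.
Variable C : numClosedFieldType.

Lemma castmx_mulmx n n' (e : n = n') (A B : 'M[C]_n) :
  castmx (e, e) A *m castmx (e, e) B = castmx (e, e) (A *m B).
Proof. by case: n' / e; rewrite !castmx_id. Qed.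

Lemma castmx0 m n m' n' (e1 : m = m') (e2 : n = n') :
  castmx (e1, e2) (0 : 'M[C]_(m, n)) = 0.
Proof. by apply/matrixP => i j; rewrite castmxE !mxE. Qed.

Variables dA dB dC dD : nat.

Lemma embed_mul (P Q : 'M[C]_(dB * dC)) :
  embed_BC dA dD P *m embed_BC dA dD Q = embed_BC dA dD (P *m Q).
Proof. by rewrite /embed_BC castmx_mulmx !tensmx_mul !mulmx1. Qed.

Lemma embed_adj (Q : 'M[C]_(dB * dC)) :
  adjmx (embed_BC dA dD Q) = embed_BC dA dD (adjmx Q).
Proof. by rewrite /embed_BC adjmx_cast !adjmx_tens !adjmx1. Qed.

Lemma embed0 : embed_BC dA dD (0 : 'M[C]_(dB * dC)) = 0.
Proof. by rewrite /embed_BC tensmx0 tens0mx castmx0. Qed.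

End Norm.

Section NormF.
Variable C : numClosedFieldType.

Lemma mx11E (M : 'M[C]_1) : M = (M 0 0)%:M.
Proof. exact: mx11_scalar. Qed.

Lemma tr11 (M : 'M[C]_1) : \tr M = M 0 0.
Proof. by rewrite /mxtrace big_ord1. Qed.

Lemma norm_formula n k (E : 'I_k -> 'M[C]_n) (Psi : 'cV[C]_n) :
  (forall h, adjmx (E h) = E h) ->
  (forall h l, E h *m E l = if h == l then E h else 0) ->
  adjmx Psi *m Psi = 1%:M ->
  hs_norm2 (Psi *m adjmx Psi - \sum_h E h *m (Psi *m adjmx Psi) *m E h) =
  1 - \sum_h ((adjmx Psi *m E h *m Psi) 0 0) ^+ 2.
Proof.
move=> Eadj Eort Pn.
set rho := Psi *m adjmx Psi.
set a := fun h => (adjmx Psi *m E h *m Psi) 0 0.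
have rhoadj : adjmx rho = rho by rewrite /rho adjmxM adjmxK.
have rho2 : rho *m rho = rho by rewrite /rho mulmxA -(mulmxA Psi) Pn mulmx1.
have trrho : \tr rho = 1 by rewrite /rho mxtrace_mulC Pn mxtrace1.
have rEr h : rho *m E h *m rho = a h *: rho.
  have -> : rho *m E h *m rho = Psi *m (adjmx Psi *m E h *m Psi) *m adjmx Psi.
    by rewrite /rho !mulmxA.
  by rewrite [adjmx Psi *m E h *m Psi]mx11E mul_mx_scalar -scalemxAl.
have trrE h : \tr (rho *m E h) = a h.
  by rewrite /rho -mulmxA mxtrace_mulC tr11.
clearbody rho.
have t1 h : \tr (rho *m E h *m rho *m E h) = a h ^+ 2.
  by rewrite rEr -scalemxAl mxtraceZ trrE expr2.
set X := \sum_h E h *m rho *m E h.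
have Xadj : adjmx X = X.
  by rewrite /X adjmx_sum; apply: eq_bigr => h _; rewrite !adjmxM Eadj rhoadj mulmxA.
have trrX : \tr (rho *m X) = \sum_h a h ^+ 2.
  rewrite /X mulmx_sumr raddf_sum; apply: eq_bigr => h _.
  by rewrite !mulmxA; exact: t1.
have trXr : \tr (X *m rho) = \sum_h a h ^+ 2.
  by rewrite mxtrace_mulC trrX.
have trXX : \tr (X *m X) = \sum_h a h ^+ 2.
  rewrite /X mulmx_suml raddf_sum; apply: eq_bigr => h _.
  rewrite mulmx_sumr (bigD1 h) //= [X in _ + X]big1 ?addr0; last first.
    move=> l /negPf hl.
    by rewrite !mulmxA -(mulmxA _ (E h)) Eort eq_sym hl mulmx0 !mul0mx.
  rewrite !mulmxA -(mulmxA _ (E h) (E h)) Eort eqxx.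
  by rewrite mxtrace_mulC !mulmxA Eort eqxx mxtrace_mulC !mulmxA t1.
rewrite /hs_norm2 adjmxB rhoadj Xadj mulmxBl !mulmxBr !raddfB /=.
by rewrite rho2 trrho trrX trXr trXX subrr addr0.
Qed.
End NormF.
Section Meas.
Variable C : numClosedFieldType.

Lemma rank1_factor n (P : 'M[C]_n) : \rank P = 1%N ->
  exists u : 'cV[C]_n, exists w : 'rV[C]_n, P = u *m w.
Proof.
case: n P => [|n] P rP.
  by have := rank_leq_row P; rewrite rP.
have := mulmx_ebase P; rewrite rP => <-.
exists (col_ebase P *m delta_mx 0 (0 : 'I_1)), (delta_mx (0 : 'I_1) 0 *m row_ebase P).
have -> : col_ebase P *m delta_mx 0 (0 : 'I_1) *m (delta_mx (0 : 'I_1) 0 *m row_ebase P)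
  = col_ebase P *m (delta_mx 0 (0 : 'I_1) *m delta_mx (0 : 'I_1) 0) *m row_ebase P.
  by rewrite !mulmxA.
rewrite mul_delta_mx; congr (_ *m _ *m _).
apply/matrixP => i j; rewrite !mxE.
congr (_%:R); rewrite -!val_eqE /=.
by case: i j => [[|i] Hi] [[|j] Hj]; rewrite /= ?andbF ?andbT.
Qed.

Lemma rank1_sandwich n (P X : 'M[C]_n) : \rank P = 1%N ->
  P *m X *m P = \tr (P *m X) *: P.
Proof.
move=> /rank1_factor [u [w ->]].
have -> : u *m w *m X *m (u *m w) = u *m (w *m X *m u) *m w by rewrite !mulmxA.
rewrite [w *m X *m u]mx11E mul_mx_scalar -scalemxAl; congr (_ *: _).
by rewrite -!mulmxA mxtrace_mulC !mulmxA tr11.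
Qed.

Lemma vN_idem d (P : 'I_d -> 'M[C]_d) : vN_meas P -> forall h, P h *m P h = P h.
Proof. by move=> [H _] h; have [] := H h. Qed.

Lemma vN_adj d (P : 'I_d -> 'M[C]_d) : vN_meas P -> forall h, adjmx (P h) = P h.
Proof. by move=> [H _] h; have [] := H h. Qed.

Lemma vN_rank d (P : 'I_d -> 'M[C]_d) : vN_meas P -> forall h, \rank (P h) = 1%N.
Proof. by move=> [H _] h; have [] := H h. Qed.

Lemma vN_ortho d (P : 'I_d -> 'M[C]_d) : vN_meas P ->
  forall h l, P h *m P l = if h == l then P h else 0.
Proof.
move=> vP; have idem := vN_idem vP; have adj := vN_adj vP.
have [_ sum1] := vP.
have key k l : l != k -> P l *m P k = 0.
  have H0 : \sum_(l | l != k) P k *m P l *m P k = 0.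
    have e : P k = \sum_l P k *m P l *m P k.
      by rewrite -mulmx_suml -mulmx_sumr sum1 mulmx1 idem.
    move: e; rewrite (bigD1 k) //= !idem => /esym H.
    by apply: (@addrI _ (P k)); rewrite addr0.
  have Htr : \sum_(l | l != k) \tr (adjmx (P l *m P k) *m (P l *m P k)) = 0.
    rewrite -raddf_sum /=.
    have -> : \sum_(l | l != k) adjmx (P l *m P k) *m (P l *m P k) =
              \sum_(l | l != k) P k *m P l *m P k.
      by apply: eq_bigr => i _; rewrite adjmxM !adj !mulmxA -(mulmxA (P k) (P i) (P i)) (idem i).
    by rewrite H0 mxtrace0.
  move/eqP: Htr; rewrite psumr_eq0; last by move=> i _; exact: tr_adj_ge0.
  move=> /allP Hall lk; apply: tr_adj_eq0; apply/eqP.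
  by have /implyP := Hall l (mem_index_enum _); apply.
move=> h l; case: eqP => [-> | /eqP hl]; first exact: idem.
by apply: key.
Qed.

Lemma vN_comm d (P : 'I_d -> 'M[C]_d) (s : 'M[C]_d) : vN_meas P ->
  meas_invariant P s -> forall k, P k *m s = s *m P k.
Proof.
move=> vP inv k; have ort := vN_ortho vP.
have E1 : P k *m s = P k *m s *m P k.
  rewrite -{1}inv mulmx_sumr (bigD1 k) //= [X in _ + X]big1 ?addr0.
    by rewrite !mulmxA ort eqxx.
  by move=> l /negPf lk; rewrite !mulmxA ort eq_sym lk !mul0mx.
have E2 : s *m P k = P k *m s *m P k.
  rewrite -{1}inv mulmx_suml (bigD1 k) //= [X in _ + X]big1 ?addr0.
    by rewrite -!mulmxA ort eqxx.
  by move=> l /negPf lk; rewrite -!mulmxA ort lk !mulmx0.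
by rewrite E1 E2.
Qed.
End Meas.
Section Sq.
Variable C : numClosedFieldType.

Lemma sum_trsq d (P : 'I_d -> 'M[C]_d) (s : 'M[C]_d) : vN_meas P ->
  meas_invariant P s -> \sum_h (\tr (P h *m s)) ^+ 2 = \tr (s *m s).
Proof.
move=> vP inv; have comm := vN_comm vP inv; have [_ sum1] := vP.
transitivity (\sum_h \tr (P h *m (s *m s))); last first.
  by rewrite -raddf_sum /= -mulmx_suml sum1 mul1mx.
apply: eq_bigr => h _.
have -> : P h *m (s *m s) = P h *m s *m P h *m s.
  by symmetry; rewrite -(mulmxA (P h) s (P h)) -comm mulmxA (vN_idem vP h) mulmxA.
by rewrite rank1_sandwich ?(vN_rank vP) // -scalemxAl mxtraceZ expr2.
Qed.

Lemma castmx_mul3 m n p m' n' p' (e1 : m = m') (e2 : n = n') (e3 : p = p')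
  (A : 'M[C]_(m, n)) (B : 'M[C]_(n, p)) :
  castmx (e1, e2) A *m castmx (e2, e3) B = castmx (e1, e3) (A *m B).
Proof. by case: m' / e1; case: n' / e2; case: p' / e3; rewrite !castmx_id. Qed.

Lemma sqrt_proj n (Psi : 'cV[C]_n) (S : 'M[C]_n) :
  adjmx Psi *m Psi = 1%:M -> is_sqrtmx (Psi *m adjmx Psi) S ->
  S = Psi *m adjmx Psi.
Proof.
move=> Pn [[Sadj Spos] S2].
set rho := Psi *m adjmx Psi.
have rhoadj : adjmx rho = rho by rewrite /rho adjmxM adjmxK.
have rho2 : rho *m rho = rho by rewrite /rho mulmxA -(mulmxA Psi) Pn mulmx1.
have M0 : S *m (1%:M - rho) = 0.
  apply: tr_adj_eq0.
  rewrite adjmxM adjmxB adjmx1 rhoadj Sadj.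
  rewrite mulmxA -(mulmxA _ S S) S2 mulmxBl mul1mx rho2 subrr mul0mx.
  by rewrite mxtrace0.
have SR : S = S *m rho.
  by apply/eqP; rewrite -subr_eq0 -{1}(mulmx1 S) -mulmxBr M0.
have RS : S = rho *m S.
  by rewrite -{1}Sadj {1}SR adjmxM rhoadj Sadj.
set c := (adjmx Psi *m S *m Psi) 0 0.
have Sc : S = c *: rho.
  rewrite SR RS.
  have -> : rho *m S *m rho = Psi *m (adjmx Psi *m S *m Psi) *m adjmx Psi.
    by rewrite /rho !mulmxA.
  by rewrite [adjmx Psi *m S *m Psi]mx11E mul_mx_scalar -scalemxAl.
have c0 : 0 <= c by apply: Spos.
have c2 : c ^+ 2 = 1.
  have SS : S *m S = (c ^+ 2) *: rho.
    by rewrite {1 2}Sc -scalemxAl -scalemxAr rho2 scalerA expr2.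
  have : adjmx Psi *m (S *m S) *m Psi = adjmx Psi *m rho *m Psi by rewrite S2.
  rewrite SS -scalemxAr -scalemxAl.
  have -> : adjmx Psi *m rho *m Psi = 1%:M.
    by rewrite /rho !mulmxA Pn mul1mx Pn.
  by move=> /matrixP /(_ 0 0); rewrite !mxE /= mulr1.
have c1 : c = 1.
  have : (c - 1) * (c + 1) = 0 by rewrite -subr_sqr c2 expr1n subrr.
  move/eqP; rewrite mulf_eq0 => /orP [/eqP|/eqP].
    by move/eqP; rewrite subr_eq0 => /eqP.
  move=> H; have : 0 < c + 1 by rewrite ltr_wpDl.
  by rewrite H ltxx.
by rewrite Sc c1 scale1r.
Qed.
End Sq.
Section Schmidt.
Variable C : numClosedFieldType.

Lemma sum_delta_r m n k (i : 'I_k) (F : 'I_k -> 'M[C]_(m,n)) :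
  \sum_j (j == i)%:R *: F j = F i.
Proof.
rewrite (bigD1 i) //= eqxx scale1r [X in _ + X]big1 ?addr0 //.
by move=> j /negPf ->; rewrite scale0r.
Qed.

Lemma outer_sum m n k (lam : 'I_k -> C) (eA : 'I_k -> 'cV[C]_m) (eB : 'I_k -> 'cV[C]_n) :
  (\sum_i lam i *: (eA i *t eB i)) *m adjmx (\sum_i lam i *: (eA i *t eB i)) =
  \sum_i \sum_j (lam i * (lam j)^*) *:
      ((eA i *m adjmx (eA j)) *t (eB i *m adjmx (eB j))).
Proof.
rewrite adjmx_sum mulmx_suml; apply: eq_bigr => i _.
rewrite mulmx_sumr; apply: eq_bigr => j _.
by rewrite adjmxZ adjmx_tens -scalemxAl -scalemxAr scalerA tensmx_mul.
Qed.

Lemma ptr1_schmidt m n k (lam : 'I_k -> C) (eA : 'I_k -> 'cV[C]_m)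
  (eB : 'I_k -> 'cV[C]_n) : orthonormal_fam eA ->
  ptr1 ((\sum_i lam i *: (eA i *t eB i)) *m adjmx (\sum_i lam i *: (eA i *t eB i)))
  = \sum_i (lam i * (lam i)^*) *: (eB i *m adjmx (eB i)).
Proof.
move=> oA; rewrite outer_sum ptr1_sum; apply: eq_bigr => i _.
rewrite ptr1_sum -[RHS](sum_delta_r i (fun j => (lam i * (lam j)^*) *: (eB i *m adjmx (eB j)))).
apply: eq_bigr => j _.
by rewrite ptr1Z ptr1_tens mxtrace_mulC tr11 oA !scalerA mulrC.
Qed.

Lemma ptr2_schmidt m n k (lam : 'I_k -> C) (eA : 'I_k -> 'cV[C]_m)
  (eB : 'I_k -> 'cV[C]_n) : orthonormal_fam eB ->
  ptr2 ((\sum_i lam i *: (eA i *t eB i)) *m adjmx (\sum_i lam i *: (eA i *t eB i)))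
  = \sum_i (lam i * (lam i)^*) *: (eA i *m adjmx (eA i)).
Proof.
move=> oB; rewrite outer_sum ptr2_sum; apply: eq_bigr => i _.
rewrite ptr2_sum -[RHS](sum_delta_r i (fun j => (lam i * (lam j)^*) *: (eA i *m adjmx (eA j)))).
apply: eq_bigr => j _.
by rewrite ptr2Z ptr2_tens mxtrace_mulC tr11 oB !scalerA mulrC.
Qed.

Lemma gram_sq n k (c : 'I_k -> C) (e : 'I_k -> 'cV[C]_n) : orthonormal_fam e ->
  \tr ((\sum_i c i *: (e i *m adjmx (e i))) *m (\sum_i c i *: (e i *m adjmx (e i))))
  = \sum_i c i ^+ 2.
Proof.
move=> oe; rewrite mulmx_suml raddf_sum /=; apply: eq_bigr => i _.
rewrite mulmx_sumr (bigD1 i) //= [X in _ + X]big1 ?addr0.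
  rewrite -scalemxAl -scalemxAr scalerA mxtraceZ -mulmxA mxtrace_mulC !mulmxA.
  have ee : adjmx (e i) *m e i = 1%:M by rewrite [LHS]mx11E oe eqxx.
  by rewrite ee mul1mx ee tr11 mxE eqxx mulr1 expr2.
move=> j /negPf ji; rewrite -scalemxAl -scalemxAr.
have -> : e i *m adjmx (e i) *m (e j *m adjmx (e j)) = e i *m (adjmx (e i) *m e j) *m adjmx (e j).
  by rewrite !mulmxA.
by rewrite [adjmx (e i) *m e j]mx11E oe eq_sym ji mul_mx_scalar scale0r mul0mx !scaler0.
Qed.

Lemma gram_adj n k (c : 'I_k -> C) (e : 'I_k -> 'cV[C]_n) :
  (forall i, (c i)^* = c i) ->
  adjmx (\sum_i c i *: (e i *m adjmx (e i))) = \sum_i c i *: (e i *m adjmx (e i)).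
Proof.
move=> cr; rewrite adjmx_sum; apply: eq_bigr => i _.
by rewrite adjmxZ adjmxM adjmxK cr.
Qed.

Lemma unit_vecE n (v : 'cV[C]_n) : unit_vec v -> adjmx v *m v = 1%:M.
Proof. by move=> u; rewrite [LHS]mx11E u. Qed.

Variables dA dB dC dD : nat.

Definition Psi4 (psi : 'cV[C]_(dA * dB)) (phi : 'cV[C]_(dC * dD)) : 'cV[C]_(dA * dB * dC * dD) :=
  castmx (dimABCD_1 dA dB dC dD, muln1 1) (psi *t phi).

Lemma tens_outer psi phi :
  tens_ABCD (psi *m adjmx psi) (phi *m adjmx phi) = Psi4 psi phi *m adjmx (Psi4 psi phi).
Proof. by rewrite /Psi4 adjmx_cast castmx_mul3 adjmx_tens tensmx_mul. Qed.

Lemma Psi4_unit psi phi : adjmx psi *m psi = 1%:M -> adjmx phi *m phi = 1%:M ->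
  adjmx (Psi4 psi phi) *m Psi4 psi phi = 1%:M.
Proof.
move=> H1 H2; rewrite /Psi4 adjmx_cast castmx_mul3 adjmx_tens tensmx_mul H1 H2.
by apply/matrixP => i j; rewrite !ord1 castmxE !mxE /= mulr1.
Qed.
End Schmidt.
Section Exist.
Variable C : numClosedFieldType.

Lemma adj_delta n (h : 'I_n) : adjmx (delta_mx h h : 'M[C]_n) = delta_mx h h.
Proof. by apply/matrixP => i j; rewrite !mxE rmorph_nat andbC. Qed.

Lemma delta_diag n (h : 'I_n) (D : 'rV[C]_n) :
  delta_mx h h *m diag_mx D *m delta_mx h h = D 0 h *: delta_mx h h.
Proof.
rewrite diag_mx_sum_delta mulmx_sumr mulmx_suml (bigD1 h) //=.
rewrite [X in _ + X]big1 ?addr0.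
  by rewrite -scalemxAr -scalemxAl !mul_delta_mx.
move=> i /negPf ih; rewrite -scalemxAr -scalemxAl mul_delta_mx_cond eq_sym ih.
by rewrite mulr0n mul0mx scaler0.
Qed.

Lemma exists_meas d (s : 'M[C]_d) : adjmx s = s ->
  exists P : 'I_d -> 'M[C]_d, vN_meas P /\ meas_invariant P s.
Proof.
move=> hs.
have nrm : s \is normalmx by apply/normalmxP; rewrite -adjmx_tstar hs.
move/orthomx_spectralP: nrm.
set U := spectralmx s; set D := spectral_diag s => sE.
have Uu : U \is unitarymx := spectral_unitarymx s.
have iU : invmx U = adjmx U by rewrite adjmx_tstar invmx_unitary.
have UU : U *m adjmx U = 1%:M by rewrite adjmx_tstar; apply/unitarymxP.
have UU' : adjmx U *m U = 1%:M by rewrite -iU mulVmx // unitarymx_unit.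
rewrite iU in sE.
exists (fun h => adjmx U *m delta_mx h h *m U).
have idem h : adjmx U *m delta_mx h h *m U *m (adjmx U *m delta_mx h h *m U) =
              adjmx U *m delta_mx h h *m U.
  have -> : adjmx U *m delta_mx h h *m U *m (adjmx U *m delta_mx h h *m U) =
            adjmx U *m delta_mx h h *m (U *m adjmx U) *m delta_mx h h *m U.
    by rewrite !mulmxA.
  by rewrite UU mulmx1 -(mulmxA (adjmx U)) mul_delta_mx.
split; [split|].
- move=> h; split => //.
    by rewrite !adjmxM adjmxK adj_delta mulmxA.
  apply/eqP; rewrite eqn_leq; apply/andP; split.
    have -> : adjmx U *m delta_mx h h *m U =
        (adjmx U *m delta_mx h (0 : 'I_1)) *m (delta_mx (0 : 'I_1) h *m U).
      by rewrite mulmxA -(mulmxA _ (delta_mx h 0)) mul_delta_mx.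
    exact: mulmx_max_rank.
  apply: (@mulmx1_min_rank _ 1 _ _ _ (delta_mx (0 : 'I_1) h *m U)
                                     (adjmx U *m delta_mx h (0 : 'I_1))).
  have -> : delta_mx (0 : 'I_1) h *m U *m (adjmx U *m delta_mx h h *m U) *m
             (adjmx U *m delta_mx h (0 : 'I_1)) =
           delta_mx (0 : 'I_1) h *m (U *m adjmx U) *m delta_mx h h *m (U *m adjmx U)
             *m delta_mx h (0 : 'I_1).
    by rewrite !mulmxA.
  rewrite !UU !mulmx1 !mul_delta_mx.
  by apply/matrixP => i j; rewrite !ord1 !mxE.
- by rewrite -mulmx_suml -mulmx_sumr -mx1_sum_delta mulmx1.
rewrite /meas_invariant.
transitivity (\sum_h adjmx U *m (D 0 h *: delta_mx h h) *m U).
  apply: eq_bigr => h _; rewrite sE -delta_diag.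
  have -> : adjmx U *m delta_mx h h *m U *m (adjmx U *m diag_mx D *m U) *m
       (adjmx U *m delta_mx h h *m U) =
    adjmx U *m delta_mx h h *m (U *m adjmx U) *m diag_mx D *m (U *m adjmx U) *m
       delta_mx h h *m U by rewrite !mulmxA.
  by rewrite !UU !mulmx1 !mulmxA.
by rewrite -mulmx_suml -mulmx_sumr -diag_mx_sum_delta sE.
Qed.
End Exist.
Theorem theorem1 (R : realType) (dA dB dC dD kAB kCD : nat)
  (psi : 'cV[R[i]]_(dA * dB)) (phi : 'cV[R[i]]_(dC * dD))
  (lam : 'I_kAB -> R[i]) (eA : 'I_kAB -> 'cV[R[i]]_dA) (eB : 'I_kAB -> 'cV[R[i]]_dB)
  (mu : 'I_kCD -> R[i]) (fC : 'I_kCD -> 'cV[R[i]]_dC) (fD : 'I_kCD -> 'cV[R[i]]_dD) :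
  unit_vec psi -> unit_vec phi ->
  (forall i, 0 <= lam i) -> orthonormal_fam eA -> orthonormal_fam eB ->
  psi = \sum_(i < kAB) lam i *: (eA i *t eB i) ->
  (forall j, 0 <= mu j) -> orthonormal_fam fC -> orthonormal_fam fD ->
  phi = \sum_(j < kCD) mu j *: (fC j *t fD j) ->
  forall S : 'M[R[i]]_(dA * dB * dC * dD),
    is_sqrtmx (tens_ABCD (psi *m adjmx psi) (phi *m adjmx phi)) S ->
    NHb_is (psi *m adjmx psi) (phi *m adjmx phi) S
      (1 - \sum_(i < kAB) \sum_(j < kCD) lam i ^+ 4 * mu j ^+ 4).
Proof.
move=> upsi uphi lam0 oA oB psiE mu0 oC oD phiE S Ssq.
have Hpsi := unit_vecE upsi; have Hphi := unit_vecE uphi.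
have PsiU := Psi4_unit Hpsi Hphi.
have rhoE := tens_outer psi phi.
set Psi := Psi4 psi phi in PsiU rhoE.
rewrite rhoE in Ssq; have SE := sqrt_proj PsiU Ssq.
set rB := ptr1 (psi *m adjmx psi); set rC := ptr2 (phi *m adjmx phi).
have rBE : rB = \sum_i (lam i ^+ 2) *: (eB i *m adjmx (eB i)).
  rewrite /rB psiE ptr1_schmidt //; apply: eq_bigr => i _.
  by rewrite geC0_conj // expr2.
have rCE : rC = \sum_j (mu j ^+ 2) *: (fC j *m adjmx (fC j)).
  rewrite /rC phiE ptr2_schmidt //; apply: eq_bigr => j _.
  by rewrite geC0_conj // expr2.
have sigadj : adjmx (rB *t rC) = rB *t rC.
  rewrite adjmx_tens rBE rCE !gram_adj // => i; apply: geC0_conj; exact: exprn_ge0.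
have trsig : \tr ((rB *t rC) *m (rB *t rC)) =
             \sum_(i < kAB) \sum_(j < kCD) lam i ^+ 4 * mu j ^+ 4.
  rewrite tensmx_mul mxtrace_tens rBE rCE !gram_sq // mulr_suml.
  apply: eq_bigr => i _; rewrite mulr_sumr; apply: eq_bigr => j _.
  by rewrite -!exprM.
have key P : vN_meas P -> meas_invariant P (rB *t rC) ->
    hs_norm2 (S - Pi_BC P S) = 1 - \sum_(i < kAB) \sum_(j < kCD) lam i ^+ 4 * mu j ^+ 4.
  move=> vP inv; rewrite /Pi_BC SE norm_formula //.
  - congr (1 - _); rewrite -trsig -(sum_trsq vP inv); apply: eq_bigr => h _.
    congr (_ ^+ 2).
    rewrite -tr11 mxtrace_mulC mulmxA mxtrace_mulC -rhoE tr_embed //.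
  - by move=> h; rewrite embed_adj (vN_adj vP).
  - move=> h l; rewrite embed_mul (vN_ortho vP); case: (h == l) => //.
    exact: embed0.
rewrite /NHb_is /=; split.
  have [P [vP inv]] := exists_meas sigadj.
  by exists P; split => //; apply: key.
by move=> P [vP inv]; rewrite key.
Qed.
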